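(* Let $k\le l$ be positive integers with $\gcd(k,l)=1$, let $n\ge1$ and $m\ge0$ be integers, and write $m=qn+r$ with integers $q\ge 0$, $0\le r<n$. Then $$U^{k,l}(m,n)= \max\bigl(nkq,\ nkq+r(k+l)-nl\bigr).$$
   Context: $\mathcal D^{k,l}(m,n)$ denotes the set of all $nk\times nl$ matrices with nonnegative integer entries all of whose row sums equal $ml$ and all of whose column sums equal $mk$. For an $s\times t$ matrix $A=(a_{ij})$ with $s\le t$, a transversal of $A$ is a set of entries $T=\{a_{1i_1},\dots,a_{si_s}\}$ with $i_1,\dots,i_s\in\{1,\dots,t\}$ pairwise distinct, and $|T|=a_{1i_1}+\cdots+a_{si_s}$. Define ${\rm tropdet}(A)=\min_T|T|$ over all transversals $T$ of $A$, and $U^{k,l}(m,n)=\max_{A\in\mathcal D^{k,l}(m,n)}{\rm tropdet}(A)$. *)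

(* Defs.v *)
From mathcomp Require Import all_boot all_order all_algebra.
Set Implicit Arguments. Unset Strict Implicit. Unset Printing Implicit Defensive.

Definition inD (k l m n : nat) (A : 'M[nat]_(n * k, n * l)) : Prop :=
  (forall i, \sum_(j < n * l) A i j = m * l) /\
  (forall j, \sum_(i < n * k) A i j = m * k).
Arguments inD : clear implicits.

(* Transversals of an s x t matrix correspond to injective maps f : 'I_s -> 'I_t;
   |T| = \sum_i A i (f i).  tropdet A is the minimum over all transversals.
   The neutral element of the iterated min is the total sum of entries, which
   bounds every |T| (entries are nonnegative), so it does not affect the
   minimum when at least one transversal exists (i.e. s <= t). *)
Definition tropdet (s t : nat) (A : 'M[nat]_(s, t)) : nat :=
  \big[minn/ \sum_(i < s) \sum_(j < t) A i j]_(f : {ffun 'I_s -> 'I_t} | injectiveb f)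
     \sum_(i < s) A i (f i).

Definition is_U (k l m n u : nat) : Prop :=
  (exists A : 'M[nat]_(n * k, n * l), inD k l m n A /\ tropdet A = u) /\
  (forall A : 'M[nat]_(n * k, n * l), inD k l m n A -> tropdet A <= u).

(* Main.v *)
Require Import Defs.
From mathcomp Require Import all_boot all_order all_algebra.
From mathcomp Require Import zify.
Set Implicit Arguments. Unset Strict Implicit. Unset Printing Implicit Defensive.

Definition nbr (I J : finType) (E : I -> J -> bool) (B : {set J}) (S : {set I}) :=
  [set j in B | [exists i in S, E i j]].

Lemma nbrD (I J : finType) (E : I -> J -> bool) B C S :
  nbr E (B :\: C) S = nbr E B S :\: C.
Proof. apply/setP => j; rewrite !inE; by case: (j \in C); case: (j \in B). Qed.

Lemma nbrU (I J : finType) (E : I -> J -> bool) B S S' :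
  nbr E B (S :|: S') = nbr E B S :|: nbr E B S'.
Proof.
apply/setP => j; rewrite !inE; case: (j \in B) => //=.
apply/existsP/orP => [[i /andP [] ]|[/existsP [i /andP [iS e]]|/existsP [i /andP [iS e]]]].
- rewrite inE => /orP [iS|iS] e; [left|right]; apply/existsP; exists i; by rewrite iS.
- by exists i; rewrite inE iS.
- by exists i; rewrite inE iS orbT.
Qed.

Lemma hall (I J : finType) (E : I -> J -> bool) (j0 : J) N :
  forall (A : {set I}) (B : {set J}), #|A| <= N ->
  (forall S : {set I}, S \subset A -> #|S| <= #|nbr E B S|) ->
  exists f : I -> J, {in A &, injective f} /\ {in A, forall i, (f i \in B) && E i (f i)}.
Proof.
elim: N => [|N IH] A B hA hH.
  have A0 : A = set0 by apply/eqP; rewrite -cards_eq0; lia.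
  by exists (fun _ => j0); rewrite A0; split => i; rewrite inE.
case: (boolP [exists S : {set I}, [&& S \proper A, S != set0 & #|nbr E B S| <= #|S|]]).
- case/existsP => S0 /and3P [pS0 nS0 cS0].
  have sS0 := proper_sub pS0.
  have cS0A := proper_card pS0.
  have [f1 [i1 h1]] : exists f : I -> J, {in S0 &, injective f} /\
                        {in S0, forall i, (f i \in B) && E i (f i)}.
    apply: IH; first lia.
    move=> S sS; apply: hH; exact: subset_trans sS sS0.
  set N0 := nbr E B S0.
  have [f2 [i2 h2]] : exists f : I -> J, {in A :\: S0 &, injective f} /\
                        {in A :\: S0, forall i, (f i \in B :\: N0) && E i (f i)}.
    apply: IH.
      have := cardsID S0 A; have -> : A :&: S0 = S0 by apply/setIidPr.
      have : 0 < #|S0| by rewrite card_gt0.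
      lia.
    move=> S sS; rewrite nbrD.
    have sSA : S \subset A by apply: subset_trans sS (subsetDl _ _).
    have dis : S :&: S0 = set0.
      apply/setP => i; rewrite !inE; apply/negP => /andP [iS iS0].
      by move: (subsetP sS i iS); rewrite inE iS0.
    have := hH (S :|: S0); rewrite subUset sSA sS0 => /(_ isT).
    rewrite nbrU cardsU dis cards0 subn0 cardsU.
    have := cardsID N0 (nbr E B S).
    rewrite /N0; lia.
  exists (fun i => if i \in S0 then f1 i else f2 i); split.
  + move=> x y xA yA /=.
    case xS: (x \in S0); case yS: (y \in S0).
    * exact: i1.
    * move=> e; have : f1 x \in N0.
        rewrite inE; have /andP [-> _] := h1 x xS; apply/existsP; exists x.
        by rewrite xS; have /andP [_ ->] := h1 x xS.
      have yD : y \in A :\: S0 by rewrite inE yS yA.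
      have /andP [] := h2 y yD; rewrite inE => /andP [] + _ _.
      by rewrite e => /negbTE ->.
    * move=> e; have : f1 y \in N0.
        rewrite inE; have /andP [-> _] := h1 y yS; apply/existsP; exists y.
        by rewrite yS; have /andP [_ ->] := h1 y yS.
      have xD : x \in A :\: S0 by rewrite inE xS xA.
      have /andP [] := h2 x xD; rewrite inE => /andP [] + _ _.
      by rewrite -e => /negbTE ->.
    * apply: i2; by rewrite inE ?xS ?yS ?xA ?yA.
  + move=> i iA /=; case iS: (i \in S0); first exact: h1.
    have iD : i \in A :\: S0 by rewrite inE iS iA.
    have /andP [] := h2 i iD; rewrite inE => /andP [_ ->] ->. done.
- move=> hno.
  have H' : forall S : {set I}, S \proper A -> S != set0 -> #|S| < #|nbr E B S|.
    move=> S pS nS; rewrite ltnNge; apply/negP => c; move/negP: hno; apply.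
    by apply/existsP; exists S; rewrite pS nS c.
  case: (set_0Vmem A) => [A0|[i0 i0A]].
    by exists (fun _ => j0); rewrite A0; split => i; rewrite inE.
  have : 0 < #|nbr E B [set i0]|.
    have := hH [set i0]; rewrite sub1set i0A cards1 => /(_ isT); lia.
  rewrite card_gt0 => /set0Pn [j1]; rewrite inE => /andP [j1B /existsP [i /andP [+ e]]].
  rewrite inE => /eqP ei; subst i.
  have [f2 [i2 h2]] : exists f : I -> J, {in A :\ i0 &, injective f} /\
                        {in A :\ i0, forall i, (f i \in B :\ j1) && E i (f i)}.
    apply: IH.
      have := cardsD1 i0 A; rewrite i0A; lia.
    move=> S sS; case: (set_0Vmem S) => [->|[i iS]]; first by rewrite cards0.
    have pS : S \proper A.
      rewrite properE (subset_trans sS (subsetDl _ _)) /=.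
      apply/negP => /subsetP /(_ i0 i0A) i0S.
      by move: (subsetP sS i0 i0S); rewrite !inE eqxx.
    have nS : S != set0 by apply/set0Pn; exists i.
    have := H' S pS nS; rewrite nbrD (cardsD1 j1 (nbr E B S)).
    case: (j1 \in nbr E B S) => /=; lia.
  exists (fun i => if i == i0 then j1 else f2 i); split.
  + move=> x y xA yA /=.
    case: (eqVneq x i0) => [->|xn]; case: (eqVneq y i0) => [->|yn] //.
    * move=> ee; have yD : y \in A :\ i0 by rewrite !inE yn yA.
      have /andP [] := h2 y yD; rewrite !inE => /andP [] + _ _.
      by rewrite -ee eqxx.
    * move=> ee; have xD : x \in A :\ i0 by rewrite !inE xn xA.
      have /andP [] := h2 x xD; rewrite !inE => /andP [] + _ _.
      by rewrite ee eqxx.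
    * apply: i2; by rewrite !inE ?xn ?yn ?xA ?yA.
  + move=> i iA /=; case: (eqVneq i i0) => [->|iN]; first by rewrite j1B e.
    have iD : i \in A :\ i0 by rewrite !inE iN iA.
    have /andP [] := h2 i iD; rewrite !inE => /andP [_ ->] ->. done.
Qed.
Definition dualP t (A : 'I_t -> 'I_t -> nat) :=
  exists x y : 'I_t -> nat, (forall i j, x i <= y j + A i j) /\
    exists f : 'I_t -> 'I_t, injective f /\
      \sum_i A i (f i) + \sum_j y j <= \sum_i x i.

Lemma sum_in (T : finType) (S : {set T}) : \sum_i (i \in S : nat) = #|S|.
Proof. by rewrite -sum1_card [RHS]big_mkcond /=; apply: eq_bigr => i _; case: (i \in S). Qed.

Lemma sum_pre t (h : 'I_t -> 'I_t) (S : {set 'I_t}) : injective h ->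
  \sum_i (h i \in S : nat) = #|S|.
Proof.
move=> ih; rewrite -(card_preimset S ih) -sum_in; apply: eq_bigr => i _.
by rewrite inE.
Qed.

Lemma dual_step t (j0 : 'I_t) (A : 'I_t -> 'I_t -> nat) (g : 'I_t -> 'I_t) :
  injective g -> dualP A \/
  exists A' : 'I_t -> 'I_t -> nat, \sum_i A' i (g i) < \sum_i A i (g i) /\ (dualP A' -> dualP A).
Proof.
move=> ig.
set E := fun i j => A i j == 0.
case: (boolP [forall S : {set 'I_t}, #|S| <= #|nbr E setT S|]) => [/forallP hH|].
  left.
  have [f [iF hF]] := @hall _ _ E j0 #|[set: 'I_t]| setT setT (leqnn _) (fun S _ => hH S).
  exists (fun _ => 0), (fun _ => 0); split => //.
  exists f; split; first by move=> x y; apply: iF; rewrite inE.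
  rewrite big1 ?big1 // => i _.
  by have /andP [_ /eqP] := hF i (in_setT i).
move/forallPn => [S]; rewrite -ltnNge => hS.
right.
set N0 := nbr E setT S.
pose A' i j := A i j + (j \in N0) - (i \in S).
have pt : forall i j, A' i j + (i \in S) = A i j + (j \in N0).
  move=> i j; rewrite /A'.
  case iS: (i \in S); case jN: (j \in N0) => //=; try lia.
  have : A i j != 0.
    apply/negP => /eqP a0.
    have : j \in N0.
      rewrite /N0 /nbr inE in_setT /=; apply/existsP; exists i; by rewrite iS /E a0.
    by move=> h; rewrite h in jN.
  lia.
have sm : forall h : 'I_t -> 'I_t, injective h ->
    \sum_i A' i (h i) + #|S| = \sum_i A i (h i) + #|N0|.
  move=> h ih; rewrite -sum_in -(sum_pre N0 ih) -!big_split /=.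
  by apply: eq_bigr => i _; rewrite pt.
exists A'; split.
  have := sm g ig; rewrite /N0; lia.
move=> [x [y [hxy [f [iF hf]]]]].
exists (fun i => x i + (i \in S)), (fun j => y j + (j \in N0)); split.
  move=> i j /=; have := hxy i j; have := pt i j; lia.
exists f; split => //.
rewrite !big_split /= sum_in sum_in.
have e := sm f iF; by rewrite addnCA -e addnA leq_add2r addnC.
Qed.

Lemma dual t (j0 : 'I_t) N : forall (A : 'I_t -> 'I_t -> nat) (g : 'I_t -> 'I_t),
  injective g -> \sum_i A i (g i) <= N -> dualP A.
Proof.
elim: N => [|N IH] A g ig hN; (case: (dual_step j0 A ig) => [//|[A' [lt h]]]).
  lia.
apply: h; apply: (IH A' g ig); lia.
Qed.
Lemma cnt N M : M <= N -> \sum_(i < N) (i < M : nat) = M.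
Proof.
move=> H.
rewrite -[RHS](card_ord M) -sum1_card (big_ord_widen N (fun _ => 1) H) [RHS]big_mkcond /=.
by apply: eq_bigr => i _; case: (i < M).
Qed.

Lemma blk N d p : 0 < d -> p < N -> \sum_(j < N * d) (j %/ d == p : nat) = d.
Proof.
move=> d0 pN.
have e : forall j : 'I_(N * d), (j < p.+1 * d : nat) = (j %/ d == p : nat) + (j < p * d : nat).
  move=> j; rewrite -!ltn_divLR //.
  case: (ltngtP (j %/ d) p) => h /=; try lia.
have := @cnt (N * d) (p.+1 * d); rewrite leq_mul2r pN orbT => /(_ isT).
rewrite (eq_bigr _ (fun j _ => e j)) big_split /= cnt; last by rewrite leq_mul2r ltnW ?orbT.
rewrite mulSn; lia.
Qed.

Lemma inj_sum s t (f : 'I_s -> 'I_t) (y : 'I_t -> nat) : injective f ->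
  \sum_i y (f i) <= \sum_j y j.
Proof.
move=> fi.
have e := @big_imset _ _ addn _ _ f [set: 'I_s] y (in2W fi).
rewrite (eq_bigl (fun i => i \in [set: 'I_s])); last by move=> i; rewrite inE.
rewrite -e [X in _ <= X](bigID (mem [set f x | x in [set: 'I_s]])) /=.
exact: leq_addr.
Qed.

Lemma bigmin_le_cond (I : finType) (P : pred I) (F : I -> nat) x j :
  P j -> \big[minn/x]_(i | P i) F i <= F j.
Proof. move=> Pj. have: j \in index_enum I by rewrite mem_index_enum.
elim: (index_enum I) => [//|a s IH]; rewrite inE big_cons => /orP [/eqP<-|js].
  by rewrite Pj geq_minl.
case: (P a); last exact: IH.
exact: leq_trans (geq_minr _ _) (IH js).
Qed.

Lemma final_arith W c T n k l q r m : m = q * n + r -> r < n -> k <= l ->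
  W + n * k * c <= n * k * T -> W + n * l * T <= n * l * c + m * k + m * l ->
  W <= maxn (n * k * q) (n * k * q + r * (k + l) - n * l).
Proof.
move=> hm rn kl e1 e2.
rewrite leq_max; apply/orP.
case: (leqP T (c + q)) => h.
  left. have : n * k * T <= n * k * (c + q) by rewrite leq_mul2l h orbT. lia.
right. have : n * l * (c + q + 1) <= n * l * T by rewrite leq_mul2l addn1 h orbT. subst m. lia.
Qed.

Lemma upper (k l n m q r : nat) : 0 < k -> k <= l -> 0 < n -> m = q * n + r -> r < n ->
  forall A : 'M[nat]_(n * k, n * l), inD k l m n A ->
  tropdet A <= maxn (n * k * q) (n * k * q + r * (k + l) - n * l).
Proof.
move=> k0 kl n0 hm rn A [hrow hcol].
have st : n * k <= n * l by rewrite leq_mul2l kl orbT.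
have t0 : 0 < n * l by rewrite muln_gt0 n0 (leq_trans k0 kl).
have s0 : 0 < n * k by rewrite muln_gt0 n0 k0.
pose j0 : 'I_(n * l) := Ordinal t0.
pose P (i j : 'I_(n * l)) : nat := oapp (fun i' : 'I_(n * k) => A i' j) 0 (insub (val i)).
have Pw : forall (i : 'I_(n * k)) j, P (widen_ord st i) j = A i j.
  by move=> i j; rewrite /P /= valK.
have Pz : forall (i : 'I_(n * l)) j, n * k <= i -> P i j = 0.
  by move=> i j h; rewrite /P insubF // ltnNge h.
have Pr : forall (i : 'I_(n * l)), i < n * k -> \sum_j P i j = m * l.
  move=> i h; have -> : i = widen_ord st (Ordinal h) by apply: val_inj.
  rewrite -(hrow (Ordinal h)); apply: eq_bigr => j _; exact: Pw.
have Pc : forall j, \sum_(i < n * l) P i j = m * k.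
  move=> j; rewrite -(hcol j).
  rewrite (bigID (fun i : 'I_(n * l) => i < n * k)) /= [X in _ + X]big1; last first.
    by move=> i; rewrite -leqNgt => h; apply: Pz.
  rewrite addn0 (big_ord_narrow st); apply: eq_bigr => i _; exact: Pw.
have [x [y [hxy [f [fi hf]]]]] :=
  @dual (n * l) j0 (\sum_i P i (id i)) P id (fun _ _ e => e) (leqnn _).
pose g : {ffun 'I_(n * k) -> 'I_(n * l)} := [ffun i => f (widen_ord st i)].
have gi : injective g.
  move=> a b; rewrite !ffunE => /fi /(congr1 val) /= e; exact: val_inj.
set W := \sum_i P i (f i) in hf.
have tW : tropdet A <= W.
  rewrite /tropdet; apply: leq_trans (@bigmin_le_cond _ (fun f : {ffun 'I_(n * k) -> 'I_(n * l)} => injectiveb f) (fun f : {ffun 'I_(n * k) -> 'I_(n * l)} => \sum_i A i (f i)) _ g (introT (@injectiveP _ _ g) gi)) _.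
  have -> : \sum_(i < n * k) A i (g i) = \sum_(i < n * l | i < n * k) P i (f i).
    rewrite (big_ord_narrow st); apply: eq_bigr => i _; by rewrite ffunE Pw.
  rewrite /W [X in _ <= X](bigID (fun i : 'I_(n * l) => i < n * k)) /=; exact: leq_addr.
case: (@arg_minnP _ j0 xpredT y isT) => jm _ hjm.
case: (@arg_maxnP _ j0 (fun i : 'I_(n * l) => i < n * k) x s0) => im him hmax.
set c := y jm in hjm *. set T := x im in hmax *.
have hc : \sum_i x i <= n * l * c + m * k.
  have := leq_sum (index_enum _) (fun i (_ : true) => hxy i jm).
  by rewrite big_split /= Pc sum_nat_const card_ord.
have hd : n * l * T <= \sum_j y j + m * l.
  have := leq_sum (index_enum _) (fun j (_ : true) => hxy im j).
  by rewrite big_split /= Pr // sum_nat_const card_ord.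
have hf2 : n * l * c <= \sum_j y j.
  have := leq_sum (index_enum _) (fun j (_ : true) => hjm j isT).
  by rewrite sum_nat_const card_ord.
have pt : forall i : 'I_(n * l), x i + (i < n * k) * c <= c + (i < n * k) * T.
  move=> i; case: (ltnP i (n * k)) => h /=.
    rewrite !mul1n addnC leq_add2l; exact: hmax i h.
  rewrite !mul0n addn0 addn0; have := hxy i jm; by rewrite Pz // addn0.
have hg : \sum_i x i + n * k * c <= n * l * c + n * k * T.
  have := leq_sum (index_enum _) (fun i (_ : true) => pt i).
  rewrite !big_split /= -!big_distrl /= cnt // sum_nat_const card_ord.
  by rewrite [n * l * c]mulnC.
apply: leq_trans tW _.
apply: (final_arith (c := c) (T := T) hm rn kl); lia.
Qed.

Lemma sum_const_ord N c : \sum_(i < N) c = N * c.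
Proof. by rewrite sum_nat_const card_ord. Qed.

Theorem theorem5p3 (k l n m q r : nat) :
  0 < k -> k <= l -> coprime k l -> 0 < n ->
  m = q * n + r -> r < n ->
  is_U k l m n (maxn (n * k * q) (n * k * q + r * (k + l) - n * l)).
Proof.
move=> k0 kl _ n0 hm rn.
have l0 : 0 < l by apply: leq_trans kl.
have rn' : r <= n by apply: ltnW.
set B := maxn _ _.
split; last exact: upper.
pose M : 'M[nat]_(n * k, n * l) := (\matrix_(i, j)
  (q + ((i < r * k) && (j < r * l)) + r * ((r * k <= i) && (i %/ k == j %/ l)))%N)%R.
have inDM : inD k l m n M.
  split.
  - move=> i; rewrite (eq_bigr (fun j : 'I_(n * l) => q + ((i < r * k) && (j < r * l))
        + r * ((r * k <= i) && (i %/ k == j %/ l)))); last by move=> j _; rewrite mxE.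
    rewrite !big_split /= sum_const_ord -big_distrr /=.
    case: (ltnP i (r * k)) => h /=.
    + rewrite big1_eq cnt; last by rewrite leq_mul2r rn' orbT.
      rewrite hm; lia.
    + rewrite big1_eq.
      have ik : i %/ k < n by rewrite ltn_divLR // mulnC.
      rewrite (eq_bigr (fun j : 'I_(n * l) => (j %/ l == i %/ k : nat))); last first.
        by move=> j _; rewrite eq_sym.
      rewrite blk //; rewrite hm; lia.
  - move=> j; rewrite (eq_bigr (fun i : 'I_(n * k) => q + ((i < r * k) && (j < r * l))
        + r * ((r * k <= i) && (i %/ k == j %/ l)))); last by move=> i _; rewrite mxE.
    rewrite !big_split /= sum_const_ord -big_distrr /=.
    case: (ltnP j (r * l)) => h /=.
    + rewrite (eq_bigr (fun i : 'I_(n * k) => (i < r * k : nat))); last by move=> i _; rewrite andbT.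
      rewrite cnt; last by rewrite leq_mul2r rn' orbT.
      have -> : \sum_(i < n * k) ((r * k <= i) && (i %/ k == j %/ l) : nat) = 0.
        apply: big1 => i _; apply/eqP; rewrite eqb0; apply/negP => /andP [h1 /eqP h2].
        have : j %/ l < r by rewrite ltn_divLR.
        have : r <= i %/ k by rewrite leq_divRL.
        lia.
      rewrite hm; lia.
    + have -> : \sum_(i < n * k) ((i < r * k) && false : nat) = 0.
        by apply: big1 => i _; rewrite andbF.
      have jl : j %/ l < n by rewrite ltn_divLR // mulnC.
      rewrite (eq_bigr (fun i : 'I_(n * k) => (i %/ k == j %/ l : nat))); last first.
        move=> i _; case e: (i %/ k == j %/ l); rewrite ?andbF //= andbT.
        move/eqP: e => e.
        have : r <= j %/ l by rewrite leq_divRL.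
        by rewrite -e -leq_divRL // => ->.
      rewrite blk //; rewrite hm; lia.
exists M; split => //.
  apply/eqP; rewrite eqn_leq (upper k0 kl n0 hm rn inDM) /=.
  case: inDM => hrow hcol.
  rewrite /tropdet; apply: (big_ind (fun v => B <= v)).
  - rewrite (eq_bigr (fun i => m * l)); last by move=> i _; exact: hrow.
    rewrite sum_const_ord /B geq_max; subst m.
    have : 1 * (n * k * (q * n + r)) <= l * (n * k * (q * n + r)) by rewrite leq_mul2r l0 orbT.
    have : 0 < n * k by rewrite muln_gt0 n0 k0.
    nia.
  - by move=> a b ha hb; rewrite leq_min ha hb.
  - move=> f /injectiveP fi.
    have pt : forall (i : 'I_(n * k)) (j : 'I_(n * l)),
        q + (i < r * k) <= M i j + (r * l <= j).
      move=> i j; rewrite mxE; case: (ltnP i (r * k)) => hi; case: (ltnP j (r * l)) => hj /=;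
        lia.
    have := leq_sum (index_enum _) (fun i (_ : true) => pt i (f i)).
    rewrite !big_split /= sum_const_ord cnt; last by rewrite leq_mul2r rn' orbT.
    have h1 := inj_sum (fun j : 'I_(n * l) => (r * l <= j : nat)) fi.
    have h2 : \sum_(j < n * l) (r * l <= j : nat) + r * l = n * l.
      have h2' : \sum_(j < n * l) ((r * l <= j : nat) + (j < r * l : nat)) = n * l.
        rewrite -[RHS]card_ord -sum1_card.
        by apply: eq_bigr => j _; case: (ltnP j (r * l)).
      by rewrite big_split /= cnt in h2'; last by rewrite leq_mul2r rn' orbT.
    have h3 : n * k * q <= \sum_i M i (f i).
      rewrite -sum_const_ord; apply: leq_sum => i _; rewrite mxE; lia.
    move=> h4; rewrite /B geq_max h3 /=.
    have {}h1 : \sum_(i < n * k) (r * l <= f i : nat) <= \sum_(j < n * l) (r * l <= j : nat) := h1.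
    move: h1 h2 h4.
    set a := \sum_(i < n * k) M i (f i).
    set b := \sum_(i < n * k) (r * l <= f i : nat).
    set c := \sum_(j < n * l) (r * l <= j : nat).
    lia.
Qed.
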